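(* Let $\mathcal{G}=\{G_1,\ldots,G_m\}$ be a consecutive grouped weight partition of $\mathbb{F}_q^k$, with $G_j=\bigcup_{i\in S_j}W_i$ where each $S_j=\{a_j,a_j+1,\ldots,b_j\}$ is an integer interval, the $S_j$ partition $\{0,\ldots,k\}$, and the blocks are ordered so that $\max S_r<\min S_s$ whenever $r<s$. If $|S_\ell|\ge 2$ for some $\ell\in\{2,\ldots,m-1\}$, then the partition graph of $\mathcal{G}$ contains no clique of size $m$.
   Context: $W_i=\{u\in\mathbb{F}_q^k:\mathrm{wt}(u)=i\}$ (Hamming weight). $d$ is Hamming distance; for distinct blocks $d(P,P')=\min_{u\in P,v\in P'}d(u,v)$. The partition graph $G_{\mathcal{P}}$ of a partition $\mathcal{P}$ of $\mathbb{F}_q^k$ has vertex set $\mathbb{F}_q^k$, and vertices $u\in P$, $v\in P'$ (blocks of $\mathcal{P}$) are adjacent iff $P\ne P'$ and $d(u,v)=d(P,P')$. *)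

(* Defs.v *)
From mathcomp Require Import all_boot all_algebra.
Import GRing.Theory.
Set Implicit Arguments. Unset Strict Implicit. Unset Printing Implicit Defensive.

(* Vectors of F_q^k are row vectors 'rV[F]_k over a finite field F (q = #|F|). *)

Definition wt (F : finFieldType) (k : nat) (u : 'rV[F]_k) : nat :=
  #|[set i : 'I_k | u ord0 i != 0%R]|.

Definition hd (F : finFieldType) (k : nat) (u v : 'rV[F]_k) : nat :=
  #|[set i : 'I_k | u ord0 i != v ord0 i]|.

(* d(P,P') = min_{u in P, v in P'} d(u,v).  Since d(u,v) <= k always, using k
   as the neutral element of minn gives the true minimum for nonempty blocks. *)
Definition blockdist (F : finFieldType) (k : nat) (P P' : {set 'rV[F]_k}) : nat :=
  \big[minn/k]_(u in P) \big[minn/k]_(v in P') hd u v.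

Definition pg_adj (F : finFieldType) (k m : nat) (G : 'I_m -> {set 'rV[F]_k})
  (u v : 'rV[F]_k) : Prop :=
  exists r s : 'I_m, [/\ r != s, u \in G r, v \in G s &
                         hd u v = blockdist (G r) (G s)].

Definition pg_clique (F : finFieldType) (k m : nat) (G : 'I_m -> {set 'rV[F]_k})
  (C : {set 'rV[F]_k}) (n : nat) : Prop :=
  #|C| = n /\ forall u v, u \in C -> v \in C -> u != v -> pg_adj G u v.

(* Consecutive grouped weight partition with (0-indexed) blocks
   G_j = union_{a j <= i <= b j} W_i, j = 0..m-1. *)
Definition cgw_block (F : finFieldType) (k m : nat) (a b : nat -> nat)
  (j : 'I_m) : {set 'rV[F]_k} :=
  [set u : 'rV[F]_k | a j <= wt u <= b j].

Definition consecutive_intervals (k m : nat) (a b : nat -> nat) : Prop :=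
  [/\ 0 < m, a 0 = 0, b m.-1 = k,
      forall j, j < m -> a j <= b j &
      forall j, j.+1 < m -> a j.+1 = (b j).+1].

(* Main.v *)
Require Import Defs.
From mathcomp Require Import all_boot all_algebra.
From mathcomp Require Import zify.
Import GRing.Theory.

Lemma bigmin_le_seq (I : eqType) (r : seq I) (P : pred I) (Fn : I -> nat) k x :
  x \in r -> P x -> \big[minn/k]_(i <- r | P i) Fn i <= Fn x.
Proof.
elim: r => [//|i r IH]; rewrite inE big_cons => /orP[/eqP ->|xr] Px.
  by rewrite Px geq_minl.
case: (P i); last exact: IH.
exact: leq_trans (geq_minr _ _) (IH xr Px).
Qed.

Lemma blockdist_le (F : finFieldType) (k : nat) (P Q : {set 'rV[F]_k}) u v :
  u \in P -> v \in Q -> blockdist P Q <= hd u v.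
Proof.
move=> uP vQ; rewrite /blockdist.
have H1 := @bigmin_le_seq _ _ _ (fun u => \big[minn/k]_(v in Q) hd u v) k _ (mem_index_enum u) uP.
apply: leq_trans H1 _.
exact: (@bigmin_le_seq _ _ _ _ k _ (mem_index_enum v) vQ).
Qed.

Lemma key (F : finFieldType) (k m : nat) (a b : nat -> nat) (r s : 'I_m)
  (x y : 'rV[F]_k) :
  b r < a s -> x \in @cgw_block F k m a b r -> y \in @cgw_block F k m a b s ->
  hd x y = blockdist (@cgw_block F k m a b r) (@cgw_block F k m a b s) ->
  wt x = b r /\ wt y = a s.
Proof.
move=> bra xin yin E.
move: (xin) (yin); rewrite !inE => /andP[xa xb] /andP[ya yb].
have [i xi yi] : exists2 i, x ord0 i == 0%R & y ord0 i != 0%R.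
  case: (pickP [pred i | (x ord0 i == 0%R) && (y ord0 i != 0%R)]) => [i /andP[]|H];
    first by exists i.
  exfalso; have : wt y <= wt x.
    rewrite /wt; apply: subset_leq_card; apply/subsetP => j; rewrite !inE => yj.
    by move: (H j) => /=; rewrite yj andbT => ->.
  lia.
have iD : i \in [set j | x ord0 j != y ord0 j].
  by rewrite inE (eqP xi) eq_sym.
have hdpos : 0 < hd x y by rewrite /hd (cardsD1 i) iD.
split.
- apply/eqP; rewrite eqn_leq xb /= leqNgt; apply/negP => lt.
  pose u : 'rV[F]_k := (\row_j (if j == i then y ord0 i else x ord0 j))%R.
  have wu : wt u = (wt x).+1.
    rewrite /wt; have -> : [set j | u ord0 j != 0%R] = i |: [set j | x ord0 j != 0%R].
      apply/setP => j; rewrite !inE !mxE.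
      by case: (eqVneq j i) => [->|ne] //=.
    by rewrite cardsU1 inE xi.
  have hu : hd u y = (hd x y).-1.
    rewrite /hd; have -> : [set j | u ord0 j != y ord0 j] = [set j | x ord0 j != y ord0 j] :\ i.
      apply/setP => j; rewrite !inE !mxE.
      by case: (eqVneq j i) => [->|ne] //=; rewrite eqxx.
    by rewrite (cardsD1 i [set j | x ord0 j != y ord0 j]) iD.
  have uin : u \in @cgw_block F k m a b r by rewrite inE wu; apply/andP; split; lia.
  have := blockdist_le _ _ _ _ _ _ uin yin; rewrite -E hu; lia.
- apply/eqP; rewrite eqn_leq ya andbT leqNgt; apply/negP => lt.
  pose v : 'rV[F]_k := (\row_j (if j == i then 0%R else y ord0 j))%R.
  have wv : wt y = (wt v).+1.
    rewrite /wt; have -> : [set j | y ord0 j != 0%R] = i |: [set j | v ord0 j != 0%R].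
      apply/setP => j; rewrite !inE !mxE.
      by case: (eqVneq j i) => [->|ne] //=; rewrite yi.
    by rewrite cardsU1 inE mxE eqxx eqxx.
  have hv : hd x v = (hd x y).-1.
    rewrite /hd; have -> : [set j | x ord0 j != v ord0 j] = [set j | x ord0 j != y ord0 j] :\ i.
      apply/setP => j; rewrite !inE !mxE.
      by case: (eqVneq j i) => [->|ne] //=; rewrite (eqP xi) eqxx.
    by rewrite (cardsD1 i [set j | x ord0 j != y ord0 j]) iD.
  have vin : v \in @cgw_block F k m a b s by rewrite inE; apply/andP; split; lia.
  have := blockdist_le _ _ _ _ _ _ xin vin; rewrite -E hv; lia.
Qed.

Theorem lemma9 (F : finFieldType) (k m : nat) (a b : nat -> nat) :
  consecutive_intervals k m a b ->
  (exists l, 0 < l < m.-1 /\ 2 <= (b l).+1 - a l) ->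
  ~ exists C : {set 'rV[F]_k}, pg_clique (@cgw_block F k m a b) C m.
Proof.
move=> [m0 a0 bk ab abS] [l [/andP[l0 lm] lab]] [C [cardC cl]].
have ord : forall i j, i < j -> j < m -> b i < a j.
  move=> i j; elim: j => [//|j IH] ij jm.
  rewrite abS //; case: (ltngtP i j) => [lt|gt|->] //.
  - have := IH lt (ltnW jm); have := ab j (ltnW jm); lia.
  - lia.
set G := @cgw_block F k m a b.
have disj : forall (r s : 'I_m) u, u \in G r -> u \in G s -> r = s.
  move=> r s u; rewrite !inE => /andP[h1 h2] /andP[h3 h4]; apply: val_inj => /=.
  case: (ltngtP r s) => [lt|gt|//].
  - have := ord _ _ lt (ltn_ord s); lia.
  - have := ord _ _ gt (ltn_ord r); lia.
pose j0 : 'I_m := Ordinal m0.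
pose f u := odflt j0 [pick j | u \in G j].
have fin : forall u, u \in C -> u \in G (f u).
  move=> u uC.
  have : 0 < #|C :\ u| by move: cardC; rewrite (cardsD1 u) uC; lia.
  case/card_gt0P => v; rewrite !inE => /andP[vu vC].
  have uv : u != v by rewrite eq_sym.
  have [r [s [_ ur _ _]]] := cl u v uC vC uv.
  rewrite /f; case: pickP => [j Hj|H]; first by move: Hj; rewrite /= ?inE.
  by move: (H r); rewrite /= ur.
have finj : {in C &, injective f}.
  move=> u v uC vC fe; apply/eqP; apply/negPn/negP => uv.
  have [r [s [rs ur vs _]]] := cl u v uC vC uv.
  have e1 := disj _ _ _ ur (fin u uC); have e2 := disj _ _ _ vs (fin v vC).
  by move: rs; rewrite e1 e2 fe eqxx.
have surj : forall j, exists2 u, u \in C & f u = j.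
  have FE : f @: C = [set: 'I_m].
    apply/eqP; rewrite eqEcard subsetT cardsT card_ord card_in_imset // cardC; by rewrite /= leqnn.
  move=> j; have : j \in f @: C by rewrite FE inE.
  by case/imsetP => u uC ->; exists u.
have h1 : l.-1 < m by lia.
have h2 : l < m by lia.
have h3 : l.+1 < m by lia.
have [x xC fx] := surj (Ordinal h1).
have [y yC fy] := surj (Ordinal h2).
have [z zC fz] := surj (Ordinal h3).
have xy : x != y.
  apply/negP => /eqP exy; move: fx; rewrite exy fy => /(congr1 val) /=; lia.
have yz : y != z.
  apply/negP => /eqP eyz; move: fy; rewrite eyz fz => /(congr1 val) /=; lia.
have [r [s [_ xr ys E]]] := cl x y xC yC xy.
have er := disj _ _ _ xr (fin x xC); rewrite fx in er.
have es := disj _ _ _ ys (fin y yC); rewrite fy in es.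
subst r s.
have [_ wy1] := key _ _ _ _ _ _ _ _ _ (ord _ _ (ltac:(clear -l0; lia) : l.-1 < l) h2) xr ys E.
have [r [s [_ yr zs E']]] := cl y z yC zC yz.
have er := disj _ _ _ yr (fin y yC); rewrite fy in er.
have es := disj _ _ _ zs (fin z zC); rewrite fz in es.
subst r s.
have [wy2 _] := key _ _ _ _ _ _ _ _ _ (ord _ _ (ltnSn l) h3) yr zs E'.
simpl in wy1, wy2; by move: lab; rewrite -wy2 -wy1 subSn // subnn.
Qed.
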